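(* Let $k$ be a symmetric positive semidefinite kernel on $\mathbb{R}^d$, $\sigma_n^2>0$, and let $\mathbb{D}_N^x=\{\bm{x}^{(i)}\}_{i=1}^N$ with $N\ge1$ be an input training data set with GP posterior variance $\sigma_N^2(\cdot)$. Then for every $\bm{x}\in\mathbb{R}^d$, $$\sigma_N^2(\bm{x})\le k(\bm{x},\bm{x})-\frac{N\min_{\bm{x}'\in\mathbb{D}_N^x}k(\bm{x}',\bm{x})^2}{N\max_{\bm{x}',\bm{x}''\in\mathbb{D}_N^x}k(\bm{x}',\bm{x}'')+\sigma_n^2}.$$
   Context: Gaussian process posterior variance: with $K_{N,ij}=k(\bm{x}^{(i)},\bm{x}^{(j)})$, $k_{N,i}(\bm{x})=k(\bm{x},\bm{x}^{(i)})$, $\bm{A}_N=\bm{K}_N+\sigma_n^2\bm{I}_N$, $\sigma_N^2(\bm{x})=k(\bm{x},\bm{x})-\bm{k}_N(\bm{x})^T\bm{A}_N^{-1}\bm{k}_N(\bm{x})$. The max and min range over training inputs (pairs may coincide). *)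

(* Defs.v *)
(* kernels over an arbitrary real field R (covers R = reals). *)
From HB Require Import structures.
From mathcomp Require Import all_boot all_order all_algebra.
Set Implicit Arguments. Unset Strict Implicit. Unset Printing Implicit Defensive.
Import Order.TTheory GRing.Theory Num.Theory.
Local Open Scope ring_scope.

Definition symmetric_kernel (R : realFieldType) (d : nat)
  (k : 'rV[R]_d -> 'rV[R]_d -> R) : Prop :=
  forall x y, k x y = k y x.

Definition psd_kernel (R : realFieldType) (d : nat)
  (k : 'rV[R]_d -> 'rV[R]_d -> R) : Prop :=
  forall (n : nat) (X : 'I_n -> 'rV[R]_d) (c : 'I_n -> R),
    0 <= \sum_(i < n) \sum_(j < n) c i * c j * k (X i) (X j).

Definition gram (R : realFieldType) (d N : nat)
  (k : 'rV[R]_d -> 'rV[R]_d -> R) (X : 'I_N -> 'rV[R]_d) : 'M[R]_N :=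
  \matrix_(i, j) k (X i) (X j).

Definition kvec (R : realFieldType) (d N : nat)
  (k : 'rV[R]_d -> 'rV[R]_d -> R) (X : 'I_N -> 'rV[R]_d) (x : 'rV[R]_d)
  : 'cV[R]_N :=
  \col_i k x (X i).

Definition Amat (R : realFieldType) (d N : nat)
  (k : 'rV[R]_d -> 'rV[R]_d -> R) (X : 'I_N -> 'rV[R]_d) (sn2 : R) : 'M[R]_N :=
  gram k X + sn2%:M.

Definition post_var (R : realFieldType) (d N : nat)
  (k : 'rV[R]_d -> 'rV[R]_d -> R) (X : 'I_N -> 'rV[R]_d) (sn2 : R)
  (x : 'rV[R]_d) : R :=
  k x x - ((kvec k X x)^T *m invmx (Amat k X sn2) *m kvec k X x) 0 0.

(* max over pairs of training inputs of k(x',x''); i0 is any index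
   (used only as the seed of the fold, the value does not depend on it) *)
Definition max_gram (R : realFieldType) (d N : nat)
  (k : 'rV[R]_d -> 'rV[R]_d -> R) (X : 'I_N -> 'rV[R]_d) (i0 : 'I_N) : R :=
  \big[Num.max/k (X i0) (X i0)]_(i < N) \big[Num.max/k (X i0) (X i0)]_(j < N)
     k (X i) (X j).

Definition min_ksq (R : realFieldType) (d N : nat)
  (k : 'rV[R]_d -> 'rV[R]_d -> R) (X : 'I_N -> 'rV[R]_d) (i0 : 'I_N)
  (x : 'rV[R]_d) : R :=
  \big[Num.min/k (X i0) x ^+ 2]_(i < N) k (X i) x ^+ 2.

(* Main.v *)
Require Import Defs.
From HB Require Import structures.
From mathcomp Require Import all_boot all_order all_algebra.
From mathcomp Require Import ring lra.
Import Order.TTheory GRing.Theory Num.Theory.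
Local Open Scope ring_scope.
Set Implicit Arguments. Unset Strict Implicit.

Lemma bigmax_ge (R : realFieldType) (I : eqType) (r : seq I) (F : I -> R) x0 i :
  i \in r -> F i <= \big[Num.max/x0]_(j <- r) F j.
Proof.
elim: r => [|a r IH] //; rewrite inE big_cons le_max => /orP [/eqP->|/IH->].
  by rewrite lexx.
by rewrite orbT.
Qed.

Lemma bigmin_le (R : realFieldType) (I : eqType) (r : seq I) (F : I -> R) x0 i :
  i \in r -> \big[Num.min/x0]_(j <- r) F j <= F i.
Proof.
elim: r => [|a r IH] //; rewrite inE big_cons ge_min => /orP [/eqP->|/IH->].
  by rewrite lexx.
by rewrite orbT.
Qed.

Lemma qf_expand (R : realFieldType) (d N : nat)
  (k : 'rV[R]_d -> 'rV[R]_d -> R) (X : 'I_N -> 'rV[R]_d) (sn2 : R) (u : 'rV[R]_N) :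
  (u *m Amat k X sn2 *m u^T) 0 0 =
  \sum_(i < N) \sum_(j < N) u 0 i * u 0 j * k (X i) (X j) + sn2 * \sum_(i < N) u 0 i ^+ 2.
Proof.
rewrite !mxE /Amat.
under eq_bigr => j _ do rewrite !mxE.
under eq_bigr => j _ do under eq_bigr => i _ do rewrite !mxE mulrDr.
under eq_bigr => j _ do rewrite big_split /= mulrDl.
rewrite big_split /=; congr (_ + _).
  rewrite exchange_big /=; apply: eq_bigr => i _; rewrite mulr_suml.
  by apply: eq_bigr => j _; rewrite mulrAC.
rewrite mulr_sumr; apply: eq_bigr => j _.
rewrite (bigD1 j) //= big1 ?addr0; last first.
  by move=> i /negPf ne; rewrite ne mulr0.
by rewrite eqxx mulr1n expr2 mulrCA mulrA.
Qed.

Lemma psd2 (R : realFieldType) (d : nat)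
  (k : 'rV[R]_d -> 'rV[R]_d -> R) (hsym : forall x y, k x y = k y x)
  (hpsd : psd_kernel k) y z a b :
  0 <= a ^+ 2 * k y y - 2 * a * b * k y z + b ^+ 2 * k z z.
Proof.
have := hpsd 2%N (fun i => if i == ord0 then y else z)
   (fun i => if i == ord0 then a else - b).
rewrite !big_ord_recr /= !big_ord0 /= !add0r.
rewrite /= (hsym z y) => h; apply: le_trans h _; rewrite le_eqVlt; apply/orP; left; apply/eqP.
rewrite !expr2; ring.
Qed.

Lemma alg1 (R : realFieldType) (m s : R) n : m * (s *+ n + s *+ n) = 2 * (n%:R * m * s).
Proof. rewrite -(mulr_natr s); ring. Qed.

Theorem mainTheorem9 (R : realFieldType) (d N : nat)
  (k : 'rV[R]_d -> 'rV[R]_d -> R) (sn2 : R)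
  (hsym : symmetric_kernel k) (hpsd : psd_kernel k) (hsn : 0 < sn2)
  (hN : (0 < N)%N) (X : 'I_N -> 'rV[R]_d) (x : 'rV[R]_d) :
  let i0 := Ordinal hN in
  post_var k X sn2 x <=
    k x x - (N%:R * min_ksq k X i0 x) / (N%:R * max_gram k X i0 + sn2).
Proof.
cbv zeta; set i0 := Ordinal hN.
set A := Amat k X sn2; set M := max_gram k X i0; set m := min_ksq k X i0 x.
set kv := kvec k X x.
have hKM : forall i j, k (X i) (X j) <= M.
  move=> i j; rewrite /M /max_gram.
  apply: le_trans (bigmax_ge _ _ (mem_index_enum i)).
  exact: (bigmax_ge _ _ (mem_index_enum j)).
have hK0 : forall i, 0 <= k (X i) (X i).
  move=> i; have := psd2 hsym hpsd (X i) (X i) 1 0.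
  by rewrite expr1n mul1r !mulr0 !mul0r subr0 (expr0n _ 2) /= mul0r addr0.
have hM0 : 0 <= M by apply: le_trans (hK0 i0) (hKM i0 i0).
have h2 : forall i j a b, 2 * a * b * k (X i) (X j) <= M * (a ^+ 2 + b ^+ 2).
  move=> i j a b; have h1 := psd2 hsym hpsd (X i) (X j) a b.
  have ha := ler_wpM2l (sqr_ge0 a) (hKM i i).
  have hb := ler_wpM2l (sqr_ge0 b) (hKM j j).
  lra.
have qf0 : forall u : 'rV[R]_N,
    sn2 * \sum_(i < N) u 0 i ^+ 2 <= (u *m A *m u^T) 0 0.
  move=> u; rewrite qf_expand lerDr; exact: hpsd N X (fun i => u 0 i).
have hUnit : A \in unitmx.
  rewrite -row_free_unit -kermx_eq0; apply/eqP/row_matrixP => i; rewrite row0.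
  set u := row i (kermx A).
  have uA : u *m A = 0 by rewrite /u -row_mul mulmx_ker row0.
  have := qf0 u; rewrite uA mul0mx mxE => hs.
  have hS : \sum_(i < N) u 0 i ^+ 2 = 0.
    apply/eqP; rewrite eq_le sumr_ge0 => [|j _]; last exact: sqr_ge0.
    rewrite andbT -(pmulr_rle0 _ hsn); exact: hs.
  apply/rowP => j.
  have := @psumr_eq0P _ _ _ (fun j => u 0 j ^+ 2) (fun j _ => sqr_ge0 (u 0 j)) hS j isT.
  by move/eqP; rewrite sqrf_eq0 => /eqP ->; rewrite mxE.
set v := invmx A *m kv.
have Av : A *m v = kv by rewrite /v mulKVmx.
have AT : A^T = A.
  rewrite /A /Amat raddfD /=; congr (_ + _); apply/matrixP => i j.
    by rewrite !mxE hsym.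
  by rewrite !mxE eq_sym.
have vA : v^T *m A = kv^T by rewrite -{1}AT -trmx_mul Av.
set c := N%:R * M + sn2.
have hc : 0 < c by rewrite /c ltr_wpDl // mulr_ge0 // ler0n.
set w := kv - c *: v.
have hw : 0 <= (w^T *m A *m w) 0 0.
  have := qf0 w^T; rewrite trmxK; apply: le_trans.
  apply: mulr_ge0; [exact: ltW | apply: sumr_ge0 => i _; exact: sqr_ge0].
have Ew : w^T *m A *m w = kv^T *m A *m kv - c *: (kv^T *m kv) - c *: (kv^T *m kv)
     + c ^+ 2 *: (kv^T *m v).
  have wT : w^T = kv^T - c *: v^T by apply/matrixP => i j; rewrite !mxE.
  rewrite wT /w !mulmxBl !mulmxBr -!scalemxAl -!scalemxAr.
  rewrite !vA -(mulmxA kv^T A v) Av scalerA -expr2 opprD opprK addrA.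
  by [].
have qE : (kv^T *m invmx A *m kv) 0 0 = (kv^T *m v) 0 0 by rewrite /v mulmxA.
set a := fun i => kv^T 0 i.
set S := \sum_(i < N) a i ^+ 2.
set T := \sum_(i < N) \sum_(j < N) a i * a j * k (X i) (X j).
have kkE : (kv^T *m kv) 0 0 = S.
  rewrite mxE; apply: eq_bigr => i _; rewrite expr2; congr (_ * _); by rewrite /a !mxE.
have hkAk : (kv^T *m A *m kv) 0 0 = T + sn2 * S.
  by have := qf_expand k X sn2 kv^T; rewrite trmxK => ->.
have hT2 : 2 * T <= \sum_(i < N) \sum_(j < N) M * (a i ^+ 2 + a j ^+ 2).
  rewrite /T mulr_sumr; apply: ler_sum => i _; rewrite mulr_sumr.
  apply: ler_sum => j _; rewrite !mulrA; exact: h2.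
have hsum : \sum_(i < N) \sum_(j < N) M * (a i ^+ 2 + a j ^+ 2)
    = 2 * (N%:R * M * S).
  under eq_bigr => i _ do rewrite -mulr_sumr big_split /= sumr_const card_ord.
  rewrite -mulr_sumr big_split /= sumr_const card_ord sumrMnl.
  exact: alg1.
have hm : N%:R * m <= S.
  have : \sum_(i < N) m <= S.
    apply: ler_sum => i _; rewrite /a mxE /kvec mxE hsym.
    exact: (bigmin_le _ _ (mem_index_enum i)).
  by rewrite sumr_const card_ord mulr_natl.
rewrite Ew in hw.
rewrite /post_var -/A -/kv qE lerD2l lerN2 ler_pdivrMr //.
move: hw hkAk kkE.
set P := kv^T *m A *m kv; set Q := kv^T *m kv; set U := kv^T *m v.
clearbody P Q U => hw hkAk' kkE'.
rewrite !mxE in hw.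
have hT : T <= N%:R * M * S by lra.
have h1 : P 0 0 <= c * S.
  rewrite hkAk' /c mulrDl; lra.
rewrite kkE' in hw.
have h4 : c * S <= c ^+ 2 * U 0 0 by lra.
have h3 : c * (N%:R * m) <= c * S by rewrite ler_wpM2l // ltW.
rewrite -(ler_pM2l hc).
have -> : c * (U 0 0 * c) = c ^+ 2 * U 0 0 by rewrite mulrC -mulrA -expr2 mulrC.
exact: le_trans h3 h4.
Qed.
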